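(* Let $F_1,\dots,F_n:\mathbb{R}^d\to\mathbb{R}^d$ with each $F_i$ $L_i$-Lipschitz, $F=\frac1n\sum_iF_i$ monotone and $L$-Lipschitz, and $z_*$ with $F(z_* )=0$. If SEG-RR is run with extrapolation step size $\gamma_2\le\frac1L$ and update step size $\gamma_1>0$, then for every epoch $k$, with $\hat z_0^k=z_0^k-\gamma_2F(z_0^k)$, $$\|z_0^k-z_*-\gamma_1nF(\hat z_0^k)\|^2\le(1+4\gamma_1^2n^2L^2)\|z_0^k-z_*\|^2-\gamma_1\gamma_2n(1-\gamma_2^2L^2)\|F(z_0^k)\|^2.$$
   Context: $F$ monotone: $\langle F(z_1)-F(z_2),z_1-z_2\rangle\ge0$. SEG-RR with step sizes $\gamma_1,\gamma_2$: for each epoch $k$ draw a permutation $\pi^k$ of $\{1,\dots,n\}$ uniformly at random; for $i=0,\dots,n-1$ set $\bar z_i^k=z_i^k-\gamma_2F_{\pi_i^k}(z_i^k)$, $z_{i+1}^k=z_i^k-\gamma_1F_{\pi_i^k}(\bar z_i^k)$; then $z_0^{k+1}=z_n^k$. *)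

(* Defs.v *)
From HB Require Import structures.
From mathcomp Require Import all_boot all_order all_fingroup all_algebra.
From mathcomp Require Import reals.
Set Implicit Arguments. Unset Strict Implicit. Unset Printing Implicit Defensive.
Import Order.TTheory GRing.Theory Num.Theory.
Local Open Scope ring_scope.

Section Defs.
Variables (R : realType) (d : nat).
Notation vec := 'rV[R]_d.

Definition dotv (u v : vec) : R := \sum_(j < d) u ord0 j * v ord0 j.
Definition enorm (u : vec) : R := Num.sqrt (dotv u u).

Definition lipschitz (L : R) (f : vec -> vec) : Prop :=
  forall x y, enorm (f x - f y) <= L * enorm (x - y).

Definition monotone (f : vec -> vec) : Prop :=
  forall x y, 0 <= dotv (f x - f y) (x - y).

Definition seg_step (g1 g2 : R) (Fi : vec -> vec) (z : vec) : vec :=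
  z - g1 *: Fi (z - g2 *: Fi z).

Definition seg_epoch (n : nat) (g1 g2 : R) (F : 'I_n -> vec -> vec)
  (p : 'S_n) (z : vec) : vec :=
  foldl (fun w i => seg_step g1 g2 (F (p i)) w) z (enum 'I_n).

Fixpoint seg_rr (n : nat) (g1 g2 : R) (F : 'I_n -> vec -> vec)
  (pi : nat -> 'S_n) (z0 : vec) (k : nat) : vec :=
  match k with
  | 0 => z0
  | k'.+1 => seg_epoch g1 g2 F (pi k') (seg_rr g1 g2 F pi z0 k')
  end.

Definition meanop (n : nat) (F : 'I_n -> vec -> vec) (z : vec) : vec :=
  n%:R^-1 *: \sum_(i < n) F i z.
End Defs.

(* Main.v *)
Require Import Defs.
From HB Require Import structures.
From mathcomp Require Import all_boot all_order all_fingroup all_algebra.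
From mathcomp Require Import reals.
From mathcomp Require Import ring lra.
Import Order.TTheory GRing.Theory Num.Theory.
Local Open Scope ring_scope.

Section Aux.
Context {R : realType} {d : nat}.
Implicit Types u v w : 'rV[R]_d.

Lemma dotvC u v : dotv u v = dotv v u.
Proof. by apply: eq_bigr => j _; rewrite mulrC. Qed.

Lemma dotvDl u v w : dotv (u + v) w = dotv u w + dotv v w.
Proof. by rewrite /dotv -big_split; apply: eq_bigr => j _; rewrite mxE mulrDl. Qed.

Lemma dotvZl (k : R) u w : dotv (k *: u) w = k * dotv u w.
Proof. by rewrite /dotv mulr_sumr; apply: eq_bigr => j _; rewrite mxE mulrA. Qed.

Lemma dotvNl u w : dotv (- u) w = - dotv u w.
Proof. by rewrite -scaleN1r dotvZl mulN1r. Qed.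

Lemma dotvBl u v w : dotv (u - v) w = dotv u w - dotv v w.
Proof. by rewrite dotvDl dotvNl. Qed.

Lemma dotvBr u v w : dotv w (u - v) = dotv w u - dotv w v.
Proof. by rewrite dotvC dotvBl !(dotvC w). Qed.

Lemma dotvDr u v w : dotv w (u + v) = dotv w u + dotv w v.
Proof. by rewrite dotvC dotvDl !(dotvC w). Qed.

Lemma dotvZr (k : R) u w : dotv w (k *: u) = k * dotv w u.
Proof. by rewrite dotvC dotvZl dotvC. Qed.

Lemma dotv_ge0 u : 0 <= dotv u u.
Proof. by apply: sumr_ge0 => j _; rewrite -expr2 sqr_ge0. Qed.

Lemma enorm_sq u : enorm u ^+ 2 = dotv u u.
Proof. by rewrite /enorm sqr_sqrtr // dotv_ge0. Qed.

Lemma enorm_ge0 u : 0 <= enorm u.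
Proof. exact: sqrtr_ge0. Qed.

Lemma lip_sq (L : R) (f : 'rV[R]_d -> 'rV[R]_d) x y : 0 <= L ->
  lipschitz L f -> dotv (f x - f y) (f x - f y) <= L ^+ 2 * dotv (x - y) (x - y).
Proof.
move=> L0 Hf; rewrite -!enorm_sq.
have h := Hf x y; have h1 := enorm_ge0 (f x - f y); have h2 := enorm_ge0 (x - y).
nra.
Qed.

Lemma expand u v (k : R) : dotv (u - k *: v) (u - k *: v)
  = dotv u u - 2 * k * dotv u v + k ^+ 2 * dotv v v.
Proof.
rewrite dotvBl !dotvBr !dotvZl !dotvZr (dotvC v u); ring.
Qed.

Lemma expandP u v (k : R) : dotv (u + k *: v) (u + k *: v)
  = dotv u u + 2 * k * dotv u v + k ^+ 2 * dotv v v.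
Proof.
rewrite dotvDl !dotvDr !dotvZl !dotvZr (dotvC v u); ring.
Qed.

End Aux.

Theorem lemma8 (R : realType) (d n : nat) (F : 'I_n -> 'rV[R]_d -> 'rV[R]_d)
  (Ls : 'I_n -> R) (L g1 g2 : R) (zstar z0 : 'rV[R]_d) (pi : nat -> 'S_n)
  (k : nat) :
  (0 < n)%N ->
  (forall i, lipschitz (Ls i) (F i)) ->
  monotone (meanop F) ->
  0 < L -> lipschitz L (meanop F) ->
  meanop F zstar = 0 ->
  0 < g2 -> g2 <= L^-1 -> 0 < g1 ->
  let z := seg_rr g1 g2 F pi z0 k in
  let zhat := z - g2 *: meanop F z in
  enorm (z - zstar - (g1 * n%:R) *: meanop F zhat) ^+ 2
    <= (1 + 4 * g1 ^+ 2 * n%:R ^+ 2 * L ^+ 2) * enorm (z - zstar) ^+ 2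
       - g1 * g2 * n%:R * (1 - g2 ^+ 2 * L ^+ 2) * enorm (meanop F z) ^+ 2.
Proof.
move=> n0 _ Hmon L0 HL Hz g20 g2L g10; cbv zeta.
set z := seg_rr _ _ _ _ _ _.
set zhat := z - g2 *: _.
set G := meanop F in Hmon HL Hz zhat *.
set c := g1 * n%:R.
have c0 : 0 < c by rewrite /c mulr_gt0 // ltr0n.
set w := z - zstar; set a := G z; set b := G zhat.
have ezh : zhat - zstar = w - g2 *: a.
  by rewrite /zhat /w /a addrAC.
rewrite !enorm_sq expand.
have gl : g2 * L <= 1 by rewrite -(ler_pdivlMr _ _ L0) mul1r.
have gl2 : g2 ^+ 2 * L ^+ 2 <= 1.
  have h : 0 <= g2 * L by rewrite mulr_ge0 // ltW.
  rewrite -exprMn expr_le1 //.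
have M : 0 <= dotv w b - g2 * dotv a b.
  have := Hmon zhat zstar; rewrite Hz subr0 ezh dotvBr dotvZr (dotvC b w) (dotvC b a).
  by [].
have L1 : dotv a a - 2 * dotv a b + dotv b b <= L ^+ 2 * (g2 ^+ 2 * dotv a a).
  have := lip_sq L G z zhat (ltW L0) HL.
  have -> : z - zhat = g2 *: a by rewrite /zhat opprB addrC subrK.
  rewrite dotvZl dotvZr -/a -/b.
  rewrite dotvBl !dotvBr (dotvC b a) => h.
  have e : g2 * (g2 * dotv a a) = g2 ^+ 2 * dotv a a by rewrite mulrA -expr2.
  rewrite e in h; lra.
have L2 : dotv a a <= L ^+ 2 * dotv w w.
  by have := lip_sq L G z zstar (ltW L0) HL; rewrite Hz subr0.
have L3 : dotv b b <= L ^+ 2 * dotv (w - g2 *: a) (w - g2 *: a).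
  by have := lip_sq L G zhat zstar (ltW L0) HL; rewrite Hz subr0 ezh.
rewrite expand in L3.
have P := dotv_ge0 (w + g2 *: a); rewrite expandP in P.
have A0 := dotv_ge0 a; have B0 := dotv_ge0 b; have W0 := dotv_ge0 w.
set W := dotv w w in L2 L3 P W0 *; set A := dotv a a in L1 L2 L3 P A0 *.
set B := dotv b b in L1 L3 B0 *.
set wb := dotv w b in M *; set ab := dotv a b in M L1 *; set wa := dotv w a in L3 P *.
rewrite -/c.
set L2' := L ^+ 2 in L1 L2 L3 gl2 *.
set g22 := g2 ^+ 2 in L1 L3 P gl2 *.
set c2 := c ^+ 2.
have c20 : 0 <= c2 by rewrite /c2 sqr_ge0.
have L20 : 0 <= L2' by rewrite /L2' sqr_ge0.
have g220 : 0 <= g22 by rewrite /g22 sqr_ge0.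
have cg : 0 <= c * g2 by rewrite mulr_ge0 // ltW.
have H1 : - 2 * c * wb <= - 2 * c * g2 * ab.
  have := mulr_ge0 (ltW c0) M.
  have -> : c * (wb - g2 * ab) = c * wb - c * g2 * ab by ring.
  lra.
have H2 : A + B - L2' * g22 * A <= 2 * ab.
  have -> : L2' * g22 * A = L2' * (g22 * A) by ring.
  lra.
have H3 : g22 * A <= W.
  have h1 : g22 * A <= g22 * (L2' * W) by rewrite ler_wpM2l.
  have h2 : W * (g22 * L2') <= W * 1 by rewrite ler_wpM2l.
  rewrite (_ : g22 * (L2' * W) = W * (g22 * L2')) in h1; last by ring.
  lra.
have H4 : B <= 4 * L2' * W.
  have X : W - 2 * g2 * wa + g22 * A <= 4 * W by lra.
  have := ler_wpM2l L20 X.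
  have -> : L2' * (4 * W) = 4 * L2' * W by ring.
  lra.
have H5 : c2 * B <= c2 * (4 * L2' * W) by rewrite ler_wpM2l.
have H6 : - 2 * c * g2 * ab <= - (c * g2) * (A + B - L2' * g22 * A).
  have := ler_wpM2l cg H2.
  have -> : c * g2 * (2 * ab) = 2 * c * g2 * ab by ring.
  lra.
have H7 : 0 <= c * g2 * B by rewrite mulr_ge0.
have -> : g1 * g2 * n%:R = c * g2 by rewrite /c; ring.
have -> : 4 * g1 ^+ 2 * n%:R ^+ 2 * L ^+ 2 = c2 * (4 * L2') by rewrite /c2 /L2' /c; ring.
rewrite -/g22 -/L2' -/c2.
have -> : c * g2 * (1 - g22 * L2') * A = c * g2 * A - c * g2 * (L2' * g22 * A) by ring.
rewrite (_ : c2 * (4 * L2' * W) = c2 * (4 * L2') * W) in H5; last by ring.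
rewrite (_ : - (c * g2) * (A + B - L2' * g22 * A) = - (c * g2 * A) - c * g2 * B + c * g2 * (L2' * g22 * A)) in H6; last by ring.
have -> : (1 + c2 * (4 * L2')) * W = W + c2 * (4 * L2') * W by ring.
clearbody c2 L2' g22 W A B wb ab wa c.
move: H1 H5 H6 H7; clear - W A B wb ab c c2 L2' g22 g2 => H1 H5 H6 H7.
lra.
Qed.
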